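(* Let $\vec o_L\in\mathbb Z_2^{m_L}$ denote the logical measurement results (after syndrome measurement and correction) of a Clifford circuit with some input codeword. Consider any undetectable circuit-level Pauli error corresponding to $e\in\mathcal P_{n(T+1)}$ in the spacetime code, arising from the circuit error together with the subsequent correction from some decoder. Then $$\mathbb P^{(e)}_L(\vec o_L)=\mathbb P_L(\vec o_L+\vec f_L(e)),$$ where $\mathbb P_L$ is the ideal logical outcome distribution, and the logical error $\vec f_L(e)\in\mathbb Z_2^{m_L}$ equals $(\langle e,L'(\vec u^L)\rangle)_{\vec u^L\in\mathcal K^L}$.
   Context: Pauli operators are taken without phases; $\langle A,B\rangle=0$ if $A,B$ commute and $1$ otherwise. A non-adaptive Clifford circuit on $n$ qubits has time steps $t=1,\dots,T$: at step $t$, Pauli measurements (if any) are performed at time slice $t-0.5$ and then a Clifford unitary $U_t$ is applied. For $t\le t'$ let $U_{t,t'}=U_{t'-1}\cdots U_t$. The spacetime code has $n(T+1)$ qubits $(q,t-0.5)$; for $F\in\mathcal P_{n(T+1)}$, $F_{t-0.5}$ is its component at slice $t-0.5$, and $\kappa_{t-0.5}(O)$ places $O\in\mathcal P_n$ at that slice with identity elsewhere. $(\overrightarrow F)_{t-0.5}=\prod_{t'=1}^{t}U_{t',t}F_{t'-0.5}U_{t',t}^\dagger$ and $(\overleftarrow F)_{t-0.5}=\prod_{t'=t}^{T+1}U_{t,t'}^\dagger F_{t'-0.5}U_{t,t'}$. A circuit error inserting $e_t$ before step $t$ is the spacetime Pauli $e=\prod_t\kappa_{t-0.5}(e_t)$.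 The input is a codeword of a stabilizer code with generators $S^{(\mathrm{ini})}_1,\dots,S^{(\mathrm{ini})}_s$, and the circuit measures $M^{(\mathrm{circ})}_1,\dots,M^{(\mathrm{circ})}_m$. $\vec E=(S^{(\mathrm{ini})}_1,\dots,S^{(\mathrm{ini})}_s,M^{(\mathrm{circ})}_1,\dots,M^{(\mathrm{circ})}_m)$, $t_j$ is the time step of $E_j$ ($0$ for initial stabilizers), and $\vec o\in\mathbb Z_2^{s+m}$ is the outcome vector. $\mathcal O^\perp$ is the set of parity checks $\vec u$ satisfied deterministically by noiseless outcomes; an error is undetectable if it flips no parity check. $\mathcal K^L$ is a set of $m_L$ linearly independent vectors $\vec u^L\in\mathbb Z_2^{s+m}$ such that in the noiseless circuit the logical outcomes are $\vec o_L=(\vec u^L\cdot\vec o)_{\vec u^L\in\mathcal K^L}$. Measured spacetime logical generators: $L'(\vec u^L)=\overleftarrow{\prod_{j=s+1}^{s+m}\kappa_{t_j-0.5}(E_j^{u^L_j})}$. Known fact (effect of faults): with error $e$ the physical outcome distribution becomes $\mathbb P(\vec o+\vec f(e))$, where $f(e)_j=0$ for $j\le s$ and $f(e)_{s+i}=\langle(\overrightarrow e)_{t_{s+i}-0.5},M^{(\mathrm{circ})}_i\rangle$. *)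

(* Defs.v *)
(* Phaseless Pauli operators are binary symplectic row vectors
   over 'F_2 (first n entries: X part, last n entries: Z part). *)
From HB Require Import structures.
From mathcomp Require Import all_boot all_order all_algebra.
Set Implicit Arguments. Unset Strict Implicit. Unset Printing Implicit Defensive.
Import GRing.Theory Num.Theory.
Local Open Scope ring_scope.

Definition pauli (n : nat) := 'rV['F_2]_(n + n).

Definition symJ (n : nat) : 'M['F_2]_(n + n) := block_mx 0 1%:M 1%:M 0.

(* <A,B> = 0 iff A, B commute, 1 otherwise *)
Definition symp (n : nat) (a b : pauli n) : 'F_2 := (a *m symJ n *m b^T) 0 0.

(* Spacetime Paulis in P_{n(T+1)}: component at slice t-0.5 (t = 1..T+1) is
   stored at index t-1 : 'I_T.+1. *)
Definition stpauli (n T : nat) := {ffun 'I_T.+1 -> pauli n}.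

Definition stsymp (n T : nat) (e f : stpauli n T) : 'F_2 :=
  \sum_(a : 'I_T.+1) symp (e a) (f a).

(* The Clifford unitary U_t (t = 1..T, stored at index t-1 : 'I_T) is given by
   its (phaseless) conjugation action P |-> U_t P U_t^dagger, a symplectic
   matrix acting on row vectors: P |-> P *m U_t. *)
Definition clifford_at (n T : nat) (U : 'I_T -> 'M['F_2]_(n + n)) (b : nat)
  : 'M['F_2]_(n + n) :=
  match @insub nat (fun k => (k < T)%N) 'I_T b with Some i => U i | None => 1%:M end.

(* conjugation action of U_{t,t'} = U_{t'-1} ... U_t, from slice index a = t-1
   to slice index a' = t'-1 *)
Definition prop_mx (n T : nat) (U : 'I_T -> 'M['F_2]_(n + n)) (a a' : nat)
  : 'M['F_2]_(n + n) :=
  foldl (fun M b => M *m clifford_at U b) 1%:M (iota a (a' - a)).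

(* forward propagation  (F->)_{t-0.5} = prod_{t'<=t} U_{t',t} F_{t'-0.5} U_{t',t}^dag *)
Definition fwd (n T : nat) (U : 'I_T -> 'M['F_2]_(n + n)) (F : stpauli n T)
  : stpauli n T :=
  [ffun a : 'I_T.+1 => \sum_(a' : 'I_T.+1 | (a' <= a)%N) F a' *m prop_mx U a' a].

(* backward propagation (<-F)_{t-0.5} = prod_{t'>=t} U_{t,t'}^dag F_{t'-0.5} U_{t,t'} *)
Definition bwd (n T : nat) (U : 'I_T -> 'M['F_2]_(n + n)) (F : stpauli n T)
  : stpauli n T :=
  [ffun a : 'I_T.+1 => \sum_(a' : 'I_T.+1 | (a <= a')%N) F a' *m invmx (prop_mx U a a')].

(* slice index t_i - 1 of circuit measurement i (measured at step tm i + 1) *)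
Definition meas_slice (T m : nat) (tm : 'I_m -> 'I_T) (i : 'I_m) : 'I_T.+1 :=
  widen_ord (leqnSn T) (tm i).

Definition dot (k : nat) (u o : 'rV['F_2]_k) : 'F_2 := (u *m o^T) 0 0.

Definition fvec (n T s m : nat) (U : 'I_T -> 'M['F_2]_(n + n))
  (Mc : 'I_m -> pauli n) (tm : 'I_m -> 'I_T) (e : stpauli n T)
  : 'rV['F_2]_(s + m) :=
  \row_(j < s + m) match split j with
                   | inl _ => 0
                   | inr i => symp (fwd U e (meas_slice tm i)) (Mc i)
                   end.

(* L'(u) = <- ( prod_{j > s} kappa_{t_j-0.5}(E_j^{u_j}) ) *)
Definition Lprime (n T s m : nat) (U : 'I_T -> 'M['F_2]_(n + n))
  (Mc : 'I_m -> pauli n) (tm : 'I_m -> 'I_T) (u : 'rV['F_2]_(s + m))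
  : stpauli n T :=
  bwd U [ffun a : 'I_T.+1 =>
           \sum_(i : 'I_m | meas_slice tm i == a) u 0 (rshift s i) *: Mc i].

(* logical error f_L(e) = (<e, L'(u^L)>)_{u^L in K^L}; K^L = rows of KL *)
Definition fL (n T s m mL : nat) (U : 'I_T -> 'M['F_2]_(n + n))
  (Mc : 'I_m -> pauli n) (tm : 'I_m -> 'I_T) (KL : 'M['F_2]_(mL, s + m))
  (e : stpauli n T) : 'rV['F_2]_mL :=
  \row_(k < mL) stsymp e (Lprime U Mc tm (row k KL)).

(* logical outcome distribution induced by an outcome distribution P:
   o_L = (u^L . o)_{u^L in K^L} = o *m KL^T *)
Definition logdist (R : numDomainType) (k mL : nat) (KL : 'M['F_2]_(mL, k))
  (P : 'rV['F_2]_k -> R) (oL : 'rV['F_2]_mL) : R :=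
  \sum_(o : 'rV['F_2]_k | o *m KL^T == oL) P o.

(* O^perp: parity checks satisfied deterministically by noiseless outcomes *)
Definition parity_checks (R : numDomainType) (k : nat) (P : 'rV['F_2]_k -> R)
  : pred 'rV['F_2]_k :=
  [pred u | [forall o, (P o != 0) ==> (dot u o == 0)]].

Definition undetectable (R : numDomainType) (k : nat) (P : 'rV['F_2]_k -> R)
  (f : 'rV['F_2]_k) : Prop :=
  forall u, u \in parity_checks P -> dot u f = 0.

(* Main.v *)
Require Import Defs.
From HB Require Import structures.
From mathcomp Require Import all_boot all_order all_algebra.
Import GRing.Theory Num.Theory.
Local Open Scope ring_scope.
Set Implicit Arguments. Unset Strict Implicit.

Section Aux.
Variable n : nat.

Definition sympl (S : 'M['F_2]_(n + n)) := S *m symJ n *m S^T = symJ n.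

Lemma sympl_mul (A B : 'M['F_2]_(n + n)) : sympl A -> sympl B -> sympl (A *m B).
Proof.
rewrite /sympl => HA HB.
by rewrite trmx_mul !mulmxA -(mulmxA A B) -(mulmxA A) HB HA.
Qed.

Lemma symJ2 : symJ n *m symJ n = 1%:M.
Proof.
rewrite /symJ mulmx_block !mulmx0 !mul0mx !mulmx1 !addr0 !add0r.
by rewrite -scalar_mx_block.
Qed.

Lemma sympl_unit (S : 'M['F_2]_(n + n)) : sympl S -> S \in unitmx.
Proof.
move=> H.
have : S *m (symJ n *m S^T *m symJ n) = 1%:M by rewrite !mulmxA H symJ2.
by case/mulmx1_unit.
Qed.

Lemma symp_moveS (S : 'M['F_2]_(n + n)) (x y : pauli n) :
  sympl S -> symp (x *m S) y = symp x (y *m invmx S).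
Proof.
move=> H; have HS := sympl_unit H.
have E : S *m symJ n = symJ n *m (invmx S)^T.
  by rewrite -{2}H trmx_inv mulmxK ?unitmx_tr.
rewrite /symp trmx_mul -!mulmxA (mulmxA S) E !mulmxA.
by [].
Qed.

Lemma symp_addl (x y b : pauli n) : symp (x + y) b = symp x b + symp y b.
Proof. by rewrite /symp !mulmxDl mxE. Qed.
Lemma symp_0l (b : pauli n) : symp 0 b = 0.
Proof. by rewrite /symp !mul0mx mxE. Qed.
Lemma symp_addr (x y b : pauli n) : symp b (x + y) = symp b x + symp b y.
Proof. by rewrite /symp linearD /= mulmxDr mxE. Qed.
Lemma symp_0r (b : pauli n) : symp b 0 = 0.
Proof. by rewrite /symp trmx0 mulmx0 mxE. Qed.
Lemma symp_scaler (c : 'F_2) (x b : pauli n) : symp b (c *: x) = c * symp b x.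
Proof. by rewrite /symp linearZ /= -scalemxAr mxE. Qed.

End Aux.

Lemma prop_sympl n T (U : 'I_T -> 'M['F_2]_(n + n))
  (HU : forall b : 'I_T, U b *m symJ n *m (U b)^T = symJ n) a a' :
  sympl (prop_mx U a a').
Proof.
rewrite /prop_mx.
have : sympl (1%:M : 'M['F_2]_(n + n)) by rewrite /sympl mul1mx trmx1 mulmx1.
elim: (iota a (a' - a)) (1%:M : 'M['F_2]_(n + n)) => [|b s IH] M HM //=.
apply: IH; apply: sympl_mul => //.
rewrite /clifford_at; case: insubP => [i _ _|_]; first exact: HU.
by rewrite /sympl mul1mx trmx1 mulmx1.
Qed.

Theorem lemma15 (R : realFieldType) (n T s m mL : nat)
  (U : 'I_T -> 'M['F_2]_(n + n))
  (HU : forall b : 'I_T, U b *m symJ n *m (U b)^T = symJ n)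
  (Mc : 'I_m -> pauli n) (tm : 'I_m -> 'I_T)
  (KL : 'M['F_2]_(mL, s + m)) (HKL : row_free KL)
  (P Pe : 'rV['F_2]_(s + m) -> R)
  (HP0 : forall o, 0 <= P o) (HP1 : \sum_o P o = 1)
  (e : stpauli n T)
  (Hfault : forall o, Pe o = P (o + fvec s U Mc tm e))
  (Hundet : undetectable P (fvec s U Mc tm e)) :
  forall oL : 'rV['F_2]_mL,
    logdist KL Pe oL = logdist KL P (oL + fL U Mc tm KL e).
Proof.
set f := fvec s U Mc tm e.
have key : f *m KL^T = fL U Mc tm KL e.
  apply/rowP => k; rewrite !mxE.
  under eq_bigr do rewrite !mxE.
  rewrite big_split_ord /= big1 ?add0r; last first.
    by move=> i _; rewrite (unsplitK (inl _ i)) mul0r.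
  under eq_bigr do rewrite (unsplitK (inr _ _)).
  rewrite /stsymp /Lprime /bwd /fwd.
  under eq_bigr do rewrite ffunE.
  under [RHS]eq_bigr do rewrite ffunE.
  under eq_bigr => i _.
    rewrite (big_morph (fun x => symp x (Mc i)) (fun x y => symp_addl x y (Mc i)) (symp_0l (Mc i))).
    rewrite big_distrl /=.
    under eq_bigr do rewrite (symp_moveS _ _ (prop_sympl HU _ _)).
    rewrite big_mkcond /=.
  over.
  rewrite exchange_big /=.
  apply: eq_bigr => a _.
  rewrite (big_morph (fun x => symp (e a) x) (fun x y => symp_addr x y (e a)) (symp_0r (e a))).
  under [RHS]eq_bigr => a' _.
    rewrite ffunE mulmx_suml.
    rewrite (big_morph (fun x => symp (e a) x) (fun x y => symp_addr x y (e a)) (symp_0r (e a))).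
    under eq_bigr do rewrite -scalemxAl symp_scaler mxE.
    rewrite big_mkcond /=.
  over.
  rewrite big_mkcond /= exchange_big /=.
  apply: eq_bigr => i _.
  case: (leqP a (tm i)) => Ha.
    rewrite (bigD1 (meas_slice tm i)) //= eqxx big1 ?addr0; first by rewrite mulrC.
    by move=> a' /andP [_ /negbTE Hne]; rewrite eq_sym Hne.
  rewrite big1 // => a' Ha'; case: eqP => // Eq.
  by move: Ha'; rewrite -Eq /= leqNgt Ha.
move=> oL; rewrite /logdist -key.
symmetry; rewrite (reindex_inj (addIr f)) /=.
apply: eq_big => o; last by rewrite Hfault.
by rewrite mulmxDl (inj_eq (addIr _)).
Qed.
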